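(* Let $(S,\mathcal C)$ be a connected connectoid and $T$ a weak normal tree of $(S,\mathcal C)$. Then a component $K\in\mathcal K(S\setminus V(T))$ has finite adhesion to $V(T)$ if and only if $N_K$ is finite.
   Context: A connectoid is given by a set $S$ and a set $\mathcal F$ of finite subsets of $S$ such that (i) $F\cup F'\in\mathcal F$ whenever $F,F'\in\mathcal F$ and $F\cap F'\neq\emptyset$, and (ii) $\emptyset\in\mathcal F$ and $\{s\}\in\mathcal F$ for every $s\in S$. A set $C\subseteq S$ is connected if for all $x,y\in C$ there is $F\in\mathcal F$ with $F\subseteq C$ and $x,y\in F$; $\mathcal C$ is the set of connected sets; $(S,\mathcal C)$ is connected if $S\in\mathcal C$. For $S'\subseteq S$, a component of $S'$ is a maximal connected subset, and $\mathcal K(S')$ is the set of components of $S'$. For $\hat S\subseteq S$, a component $K\in\mathcal K(S\setminus\hat S)$ has finite adhesion to $\hat S$ if there is a finite $X\subseteq\hat S$ with $K\in\mathcal K(S\setminus X)$. For a rooted tree $T$ with tree order $\le_T$ and $t\in V(T)$, let $\mathrm{Down}^\circ_T(t)=\{x\in V(T):x<_T t\}$ and let $K_t^T$ be the element of $\mathcal K(S\setminus\mathrm{Down}^\circ_T(t))$ containing $t$. A weak normal tree of $(S,\mathcal C)$ is a rooted undirected tree $T$ with $V(T)\subseteq S$ such that (1) for every $C\in\mathcal C$ and every two $\le_T$-incomparable $u,v\in C\cap V(T)$ there is $w\in C$ with $w\le_T u$ and $w\le_T v$, and (2) for all $u\le_T v$ in $V(T)$ there is $C\in\mathcal C$ containing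 $u,v$ with $C\cap\mathrm{Down}^\circ_T(u)=\emptyset$. For $K\in\mathcal K(S\setminus V(T))$, $N_K:=\{t\in V(T):K\subseteq K_t^T\}$. *)

(* Defs.v *)
From Stdlib Require Import List.
Import ListNotations.
Set Implicit Arguments.

Section Defs.
Variable S : Type.

Definition subset (A B : S -> Prop) : Prop := forall x, A x -> B x.
Definition setminus (A B : S -> Prop) : S -> Prop := fun x => A x /\ ~ B x.
Definition setU (A B : S -> Prop) : S -> Prop := fun x => A x \/ B x.
Definition setT : S -> Prop := fun _ => True.
Definition set0 : S -> Prop := fun _ => False.
Definition set1 (s : S) : S -> Prop := fun x => x = s.

Definition finite_set (A : S -> Prop) : Prop :=
  exists l : list S, forall x, A x <-> In x l.

Definition connectoid (F : (S -> Prop) -> Prop) : Prop :=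
  (forall A, F A -> finite_set A) /\
  (forall A B, F A -> F B -> (exists x, A x /\ B x) -> F (setU A B)) /\
  F set0 /\ (forall s, F (set1 s)).

Definition connected_set (F : (S -> Prop) -> Prop) (C : S -> Prop) : Prop :=
  forall x y, C x -> C y -> exists A, F A /\ subset A C /\ A x /\ A y.

Definition connected_connectoid (F : (S -> Prop) -> Prop) : Prop :=
  connectoid F /\ connected_set F setT.

Definition is_component (F : (S -> Prop) -> Prop) (S' K : S -> Prop) : Prop :=
  subset K S' /\ connected_set F K /\
  (forall K', subset K K' -> subset K' S' -> connected_set F K' -> subset K' K).

Definition finite_adhesion (F : (S -> Prop) -> Prop) (Vh K : S -> Prop) : Prop :=
  exists X, finite_set X /\ subset X Vh /\ is_component F (setminus setT X) K.

Fixpoint chain (E : S -> S -> Prop) (l : list S) : Prop :=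
  match l with
  | x :: ((y :: _) as t) => E x y /\ chain E t
  | _ => True
  end.

Definition is_path (V : S -> Prop) (E : S -> S -> Prop) (u v : S) (p : list S) : Prop :=
  (exists q, p = u :: q) /\ last p u = v /\ NoDup p /\
  (forall x, In x p -> V x) /\ chain E p.

Definition rooted_tree (V : S -> Prop) (E : S -> S -> Prop) (r : S) : Prop :=
  (forall x y, E x y -> V x /\ V y) /\
  (forall x y, E x y -> E y x) /\
  (forall x, ~ E x x) /\
  (forall u v, V u -> V v -> exists! p, is_path V E u v p) /\
  V r.

Definition tree_le (V : S -> Prop) (E : S -> S -> Prop) (r : S) (x y : S) : Prop :=
  V x /\ V y /\ exists p, is_path V E r y p /\ In x p.

Definition tree_lt V E r (x y : S) : Prop := tree_le V E r x y /\ x <> y.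

Definition down_open V E r (t : S) : S -> Prop := fun x => tree_lt V E r x t.

Definition weak_normal_tree (F : (S -> Prop) -> Prop)
    (V : S -> Prop) (E : S -> S -> Prop) (r : S) : Prop :=
  rooted_tree V E r /\
  (forall C, connected_set F C -> forall u v, C u -> C v -> V u -> V v ->
      ~ tree_le V E r u v -> ~ tree_le V E r v u ->
      exists w, C w /\ tree_le V E r w u /\ tree_le V E r w v) /\
  (forall u v, tree_le V E r u v ->
      exists C, connected_set F C /\ C u /\ C v /\
        (forall x, C x -> ~ down_open V E r u x)).

Definition N_K (F : (S -> Prop) -> Prop) V E r (K : S -> Prop) : S -> Prop :=
  fun t => V t /\ exists Kt, is_component F (setminus setT (down_open V E r t)) Kt /\
                              Kt t /\ subset K Kt.

End Defs.

(* Main.v *)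
Require Import Defs.
From Stdlib Require Import List Classical.
Import ListNotations.

Lemma finite_sub {S : Type} (B : S -> Prop) (l : list S) :
  (forall x, B x -> In x l) -> finite_set B.
Proof.
  intros H.
  assert (G : forall l0, exists l', forall x, (B x /\ In x l0) <-> In x l').
  { induction l0 as [|a l0 [l' IH]].
    - exists nil. intros x; simpl; tauto.
    - destruct (classic (B a)) as [Ba|nBa].
      + exists (a :: l'). intros x; simpl. rewrite <- IH. split.
        * intros [Bx [->|Hx]]; auto.
        * intros [<-|[Bx Hx]]; auto.
      + exists l'. intros x; simpl. rewrite <- IH. split.
        * intros [Bx [->|Hx]]; [contradiction|auto].
        * intros [Bx Hx]; auto. }
  destruct (G l) as [l' Hl']. exists l'. intros x. rewrite <- Hl'. split.
  - intros Bx; auto.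
  - tauto.
Qed.

Lemma chain_app_l {S : Type} (E : S -> S -> Prop) (a b : list S) :
  chain E (a ++ b) -> chain E a.
Proof.
  induction a as [|x a IH]; [simpl; auto|].
  destruct a as [|y a']; [simpl; auto|].
  intros H. change (E x y /\ chain E ((y :: a') ++ b)) in H.
  change (E x y /\ chain E (y :: a')). destruct H; split; auto.
Qed.

Lemma first_in {S : Type} (P : S -> Prop) (l : list S) :
  (exists z, In z l /\ P z) ->
  exists a t b, l = a ++ t :: b /\ P t /\ forall z, In z a -> ~ P z.
Proof.
  induction l as [|x l IH]; intros [z [Hz Pz]].
  - destruct Hz.
  - destruct (classic (P x)) as [Px|nPx].
    + exists nil, x, l. simpl. split; [reflexivity|]. split; [exact Px|]. intros _ [].
    + destruct Hz as [->|Hz]; [contradiction|].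
      destruct IH as [a [t [b [Heq [Pt Ha]]]]]; [exists z; auto|].
      exists (x :: a), t, b. rewrite Heq. simpl. split; auto. split; auto.
      intros w [<-|Hw]; auto.
Qed.

Lemma prefix_path {S : Type} (V : S -> Prop) E r v (a : list S) t b :
  is_path V E r v (a ++ t :: b) -> is_path V E r t (a ++ [t]).
Proof.
  intros [[q Hq] [_ [Hnd [HV Hch]]]].
  assert (Heq : a ++ t :: b = (a ++ [t]) ++ b) by (rewrite <- app_assoc; reflexivity).
  rewrite Heq in Hnd, HV, Hch.
  split; [|split; [|split; [|split]]].
  - destruct a as [|y a']; simpl in Hq; injection Hq; intros; subst.
    + exists nil; reflexivity.
    + exists (a' ++ [t]); reflexivity.
  - apply last_last.
  - eapply NoDup_app_remove_r; eauto.
  - intros x Hx. apply HV. apply in_or_app; left; auto.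
  - eapply chain_app_l; eauto.
Qed.

Lemma last_in {S : Type} (q : list S) : forall (x d : S), In (last (x :: q) d) (x :: q).
Proof.
  induction q as [|y q IH]; intros x d.
  - simpl; auto.
  - change (last (x :: y :: q) d) with (last (y :: q) d). right. apply IH.
Qed.

Lemma comp_exists {S : Type} (F : (S -> Prop) -> Prop) (S' : S -> Prop) (t : S) :
  connectoid F -> S' t -> exists Kt, is_component F S' Kt /\ Kt t /\
    (forall C, connected_set F C -> subset C S' -> C t -> subset C Kt).
Proof.
  intros [_ [Hun [_ H1]]] St.
  set (Kt := fun x => exists C, connected_set F C /\ subset C S' /\ C t /\ C x).
  assert (Kt_t : Kt t).
  { exists (set1 t). split; [|split; [|split]].
    - intros x y Hx Hy. exists (set1 t). unfold set1 in *; subst.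
      split; auto. split; [intros z Hz; exact Hz|]. split; reflexivity.
    - intros z Hz. unfold set1 in Hz; subst; auto.
    - reflexivity.
    - reflexivity. }
  exists Kt. split; [|split; [exact Kt_t|]].
  - split; [|split].
    + intros x [C [_ [HS [_ Cx]]]]. auto.
    + intros x y [C1 [HC1 [HS1 [Ht1 Hx1]]]] [C2 [HC2 [HS2 [Ht2 Hy2]]]].
      destruct (HC1 x t Hx1 Ht1) as [A1 [HA1 [Hs1 [A1x A1t]]]].
      destruct (HC2 t y Ht2 Hy2) as [A2 [HA2 [Hs2 [A2t A2y]]]].
      exists (setU A1 A2). split; [apply Hun; auto; exists t; auto|].
      split; [|split; [left; auto|right; auto]].
      intros z [Hz|Hz].
      * exists C1; auto.
      * exists C2; auto.
    + intros K' HK' HK'S HK'c x K'x. exists K'. repeat split; auto.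
  - intros C HC HCS Ct x Cx. exists C; auto.
Qed.

Theorem proposition6p2 (S : Type) (F : (S -> Prop) -> Prop)
  (V : S -> Prop) (E : S -> S -> Prop) (r : S) (K : S -> Prop) :
  connected_connectoid F ->
  weak_normal_tree F V E r ->
  is_component F (setminus (@setT S) V) K ->
  (finite_adhesion F V K <-> finite_set (N_K F V E r K)).
Proof.
  intros HconnC HW HK.
  destruct HconnC as [Hco _].
  destruct HW as [HT [HW1 HW2]].
  destruct HT as [HTE [HTsym [HTirr [HTpath HTr]]]].
  destruct HK as [HKsub [HKconn HKmax]].
  split.
  - intros [X [HXfin [HXV HXc]]].
    destruct HXc as [_ [_ HXmax]].
    assert (HN : forall t, N_K F V E r K t -> exists x, X x /\ tree_le V E r t x).
    { intros t [Vt [Kt [[HKtsub [HKtconn _]] [Ktt HKKt]]]].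
      apply NNPP; intro Hno.
      assert (Hno' : forall x, X x -> ~ tree_le V E r t x)
        by (intros x Xx Hle; apply Hno; exists x; auto).
      assert (Hnlt : forall y, Kt y -> ~ tree_lt V E r y t)
        by (intros y Hy; exact (proj2 (HKtsub y Hy))).
      assert (HKtX : subset Kt (setminus (@setT S) X)).
      { intros x Ktx. split; [exact I|]. intro Xx.
        assert (Vx := HXV x Xx).
        assert (Hn1 : ~ tree_le V E r t x) by auto.
        assert (Hn2 : ~ tree_le V E r x t).
        { intro Hle. destruct (classic (x = t)) as [->|Hne].
          - exact (Hn1 Hle).
          - exact (Hnlt x Ktx (conj Hle Hne)). }
        destruct (HW1 Kt HKtconn t x Ktt Ktx Vt Vx Hn1 Hn2) as [w [Ktw [Hwt Hwx]]].
        destruct (classic (w = t)) as [->|Hne].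
        - exact (Hn1 Hwx).
        - exact (Hnlt w Ktw (conj Hwt Hne)). }
      pose proof (HXmax Kt HKKt HKtX HKtconn) as HKtK.
      exact (proj2 (HKsub t (HKtK t Ktt)) Vt). }
    destruct HXfin as [lx Hlx].
    assert (G : forall l0, (forall x, In x l0 -> X x) ->
               exists l, forall t x, In x l0 -> tree_le V E r t x -> In t l).
    { induction l0 as [|a l0 IH]; intros Hsub.
      - exists nil. intros t x [].
      - destruct IH as [l Hl]; [intros x Hx; apply Hsub; right; auto|].
        assert (Va : V a) by (apply HXV, Hsub; left; reflexivity).
        destruct (HTpath r a HTr Va) as [pa [Hpa Hpau]].
        exists (pa ++ l). intros t x [->|Hin] Hle.
        + destruct Hle as [_ [_ [p [Hp Hinp]]]].
          rewrite <- (Hpau p Hp) in Hinp. apply in_or_app; left; auto.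
        + apply in_or_app; right; eapply Hl; eauto. }
    destruct (G lx) as [l Hl]; [intros x Hx; apply Hlx; auto|].
    apply (finite_sub _ l). intros t Ht.
    destruct (HN t Ht) as [x [Xx Hle]].
    eapply Hl; [apply Hlx; exact Xx| exact Hle].
  - intro HNfin. exists (N_K F V E r K). split; [exact HNfin|].
    split; [intros t [Vt _]; exact Vt|].
    split; [| split; [exact HKconn|]].
    + intros x Kx. split; [exact I|]. intros [Vx _]. exact (proj2 (HKsub x Kx) Vx).
    + intros K' HKK' HK'sub HK'conn.
      destruct (classic (exists v, K' v /\ V v)) as [[v [K'v Vv]] | Hnone].
      * exfalso. destruct (HTpath r v HTr Vv) as [pv [Hpv Hpvu]].
        assert (Hin : exists z, In z pv /\ K' z).
        { exists v. split; auto.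
          destruct Hpv as [[q Hq] [Hlast _]]. subst pv. rewrite <- Hlast. apply last_in. }
        destruct (first_in _ _ Hin) as [a [t [b [Heq [K't Ha]]]]].
        rewrite Heq in Hpv.
        pose proof (prefix_path _ _ _ _ _ _ _ Hpv) as Hpt.
        assert (Vt : V t).
        { destruct Hpv as [_ [_ [_ [HV _]]]]. apply HV. apply in_or_app; right; left; auto. }
        assert (HK'D : subset K' (setminus (@setT S) (down_open V E r t))).
        { intros y K'y. split; [exact I|]. intros [[Vy [_ [p [Hp Hyp]]]] Hne].
          destruct (HTpath r t HTr Vt) as [p0 [_ Hu]].
          rewrite <- (Hu p Hp), (Hu _ Hpt) in Hyp.
          apply in_app_or in Hyp. destruct Hyp as [Hya | [Hyt | []]].
          - exact (Ha y Hya K'y).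
          - exact (Hne (eq_sym Hyt)). }
        destruct (comp_exists F (setminus (@setT S) (down_open V E r t)) t Hco)
          as [Kt [HKtc [Ktt HKtmax]]].
        { split; [exact I|]. intros [_ Hne]. exact (Hne eq_refl). }
        assert (NKt : N_K F V E r K t).
        { split; [exact Vt|]. exists Kt. split; [exact HKtc|]. split; [exact Ktt|].
          intros x Kx. apply (HKtmax K' HK'conn HK'D K't). apply HKK', Kx. }
        exact (proj2 (HK'sub t K't) NKt).
      * apply HKmax; auto. intros x K'x. split; [exact I|]. intro Vx.
        apply Hnone. exists x; auto.
Qed.
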